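(* For every basis $\Gamma$, terms $M,N\in\Lambda_R$ and type $\sigma\in\mathbb{T}$: if $\Gamma\vdash M:\sigma$ and $M\to N$, then $\Gamma\vdash N:\sigma$.
   Context: \textbf{Terms.} $\Lambda_R\ni M,N ::= x\mid\lambda x.M\mid MN\mid M.l\mid R\mid M\oplus R$, with records $R ::= \langle l_i=M_i\mid i\in I\rangle$ ($I$ finite, labels pairwise distinct), $x$ ranging over variables and $l$ over labels; $\mathit{lbl}(\langle l_i=M_i\mid i\in I\rangle)=\{l_i\mid i\in I\}$. Reduction $\to$ is the least compatible relation (closed under all term constructors) containing $(\lambda x.M)N\to M[N/x]$ (capture-avoiding substitution); $\langle l_i=M_i\mid i\in I\rangle.l_j\to M_j$ if $j\in I$; $\langle l_i=M_i\mid i\in I\rangle\oplus\langle l_j=N_j\mid j\in J\rangle\to\langle l_i=M_i,\ l_j=N_j\mid i\in I\setminus J,\ j\in J\rangle$. \textbf{Types.} $\mathbb{T}\ni\sigma ::= a\mid\omega\mid\sigma_1\to\sigma_2\mid\sigma_1\cap\sigma_2\mid\rho$, record types $\mathbb{T}_R\ni\rho ::= \langle\rangle\mid\langle l:\sigma\rangle\mid\rho_1+\rho_2\mid\rho_1\cap\rho_2$. Subtyping $\le$ is the least preorder with: $\sigma\le\omega$; $\omega\le\omega\to\omega$; $\sigma\cap\tau\le\sigma$; $\sigma\cap\tau\le\tau$; $\sigma\le\tau_1,\sigma\le\tau_2\Rightarrow\sigma\le\tau_1\cap\tau_2$; $(\sigma\to\tau_1)\cap(\sigma\to\tau_2)\le\sigma\to\tau_1\cap\tau_2$;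 $\sigma_2\le\sigma_1,\tau_1\le\tau_2\Rightarrow\sigma_1\to\tau_1\le\sigma_2\to\tau_2$; $\langle l:\sigma\rangle\le\langle\rangle$; $\langle l:\sigma\rangle\cap\langle l:\tau\rangle\le\langle l:\sigma\cap\tau\rangle$; $\sigma\le\tau\Rightarrow\langle l:\sigma\rangle\le\langle l:\tau\rangle$; $\rho+\langle\rangle=\langle\rangle+\rho=\rho$; $(\rho_1+\rho_2)+\rho_3=\rho_1+(\rho_2+\rho_3)$; $(\rho_1\cap\rho_2)+\rho_3=(\rho_1+\rho_3)\cap(\rho_2+\rho_3)$; $\langle l:\sigma\rangle+(\langle l:\tau\rangle\cap\rho)=\langle l:\tau\rangle\cap\rho$; $\langle l:\sigma\rangle+(\langle l':\tau\rangle\cap\rho)=\langle l':\tau\rangle\cap(\langle l:\sigma\rangle+\rho)$ if $l\neq l'$; $\rho_1\le\rho_2\Rightarrow\rho_1+\rho\le\rho_2+\rho$; $\rho_1=\rho_2\Rightarrow\rho+\rho_1=\rho+\rho_2$; where $\sigma=\tau$ means $\sigma\le\tau$ and $\tau\le\sigma$. $\mathit{lbl}(\langle\rangle)=\emptyset$, $\mathit{lbl}(\langle l:\sigma\rangle)=\{l\}$, $\mathit{lbl}(\rho_1\cap\rho_2)=\mathit{lbl}(\rho_1+\rho_2)=\mathit{lbl}(\rho_1)\cup\mathit{lbl}(\rho_2)$. \textbf{Type assignment.} A basis $\Gamma$ is a finite set $\{x_1:\sigma_1,\ldots,x_n:\sigma_n\}$ with distinct variables. Rules: $\Gamma\vdash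 x:\sigma$ if $x:\sigma\in\Gamma$; from $\Gamma,x:\sigma\vdash M:\tau$ infer $\Gamma\vdash\lambda x.M:\sigma\to\tau$; from $\Gamma\vdash M:\sigma\to\tau$, $\Gamma\vdash N:\sigma$ infer $\Gamma\vdash MN:\tau$; from $\Gamma\vdash M:\sigma$, $\Gamma\vdash M:\tau$ infer $\Gamma\vdash M:\sigma\cap\tau$; $\Gamma\vdash M:\omega$; from $\Gamma\vdash M:\sigma$, $\sigma\le\tau$ infer $\Gamma\vdash M:\tau$; $\Gamma\vdash\langle l_i=M_i\mid i\in I\rangle:\langle\rangle$; from $\Gamma\vdash M_k:\sigma$, $k\in I$ infer $\Gamma\vdash\langle l_i=M_i\mid i\in I\rangle:\langle l_k:\sigma\rangle$; from $\Gamma\vdash M:\langle l:\sigma\rangle$ infer $\Gamma\vdash M.l:\sigma$; from $\Gamma\vdash M:\rho_1$, $\Gamma\vdash R:\rho_2$ and $\mathit{lbl}(R)=\mathit{lbl}(\rho_2)$ infer $\Gamma\vdash M\oplus R:\rho_1+\rho_2$. *)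

(* Defs.v *)
From Stdlib Require Import List Arith Bool.
Import ListNotations.

Definition label := nat.
Definition atom := nat.

Inductive term : Type :=
| Var : nat -> term
| Lam : term -> term
| App : term -> term -> term
| Sel : term -> label -> term
| Rec : list (label * term) -> term
| Merge : term -> list (label * term) -> term.

Definition rec_lbl (fs : list (label * term)) : list label := map fst fs.

(** Terms of Lambda_R: all records have pairwise distinct labels. *)
Inductive wf_term : term -> Prop :=
| wf_Var : forall n, wf_term (Var n)
| wf_Lam : forall M, wf_term M -> wf_term (Lam M)
| wf_App : forall M N, wf_term M -> wf_term N -> wf_term (App M N)
| wf_Sel : forall M l, wf_term M -> wf_term (Sel M l)
| wf_Rec : forall fs, NoDup (rec_lbl fs) ->
    Forall (fun p => wf_term (snd p)) fs -> wf_term (Rec fs)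
| wf_Merge : forall M fs, wf_term M -> NoDup (rec_lbl fs) ->
    Forall (fun p => wf_term (snd p)) fs -> wf_term (Merge M fs).

Fixpoint lift_by (k c : nat) (M : term) : term :=
  match M with
  | Var n => if c <=? n then Var (n + k) else Var n
  | Lam M1 => Lam (lift_by k (S c) M1)
  | App M1 M2 => App (lift_by k c M1) (lift_by k c M2)
  | Sel M1 l => Sel (lift_by k c M1) l
  | Rec fs => Rec (map (fun p => (fst p, lift_by k c (snd p))) fs)
  | Merge M1 fs => Merge (lift_by k c M1) (map (fun p => (fst p, lift_by k c (snd p))) fs)
  end.

(** subst M k N : capture-avoiding substitution of N for variable k in M
    (variables above k are decremented since the binder disappears). *)
Fixpoint subst (M : term) (k : nat) (N : term) : term :=
  match M with
  | Var n => if n <? k then Var n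
             else if n =? k then lift_by k 0 N
             else Var (pred n)
  | Lam M1 => Lam (subst M1 (S k) N)
  | App M1 M2 => App (subst M1 k N) (subst M2 k N)
  | Sel M1 l => Sel (subst M1 k N) l
  | Rec fs => Rec (map (fun p => (fst p, subst (snd p) k N)) fs)
  | Merge M1 fs => Merge (subst M1 k N) (map (fun p => (fst p, subst (snd p) k N)) fs)
  end.

Definition rec_merge (fs gs : list (label * term)) : list (label * term) :=
  filter (fun p => negb (existsb (Nat.eqb (fst p)) (rec_lbl gs))) fs ++ gs.

Inductive step : term -> term -> Prop :=
| st_beta : forall M N, step (App (Lam M) N) (subst M 0 N)
| st_sel : forall fs l Mj, In (l, Mj) fs -> step (Sel (Rec fs) l) Mj
| st_merge : forall fs gs, step (Merge (Rec fs) gs) (Rec (rec_merge fs gs))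
| st_lam : forall M M', step M M' -> step (Lam M) (Lam M')
| st_appl : forall M M' N, step M M' -> step (App M N) (App M' N)
| st_appr : forall M N N', step N N' -> step (App M N) (App M N')
| st_selc : forall M M' l, step M M' -> step (Sel M l) (Sel M' l)
| st_rec : forall fs1 fs2 l M M', step M M' ->
    step (Rec (fs1 ++ (l, M) :: fs2)) (Rec (fs1 ++ (l, M') :: fs2))
| st_mergel : forall M M' gs, step M M' -> step (Merge M gs) (Merge M' gs)
| st_merger : forall N fs1 fs2 l M M', step M M' ->
    step (Merge N (fs1 ++ (l, M) :: fs2)) (Merge N (fs1 ++ (l, M') :: fs2)).

Inductive ty : Type :=
| TAtom : atom -> ty
| TOmega : ty
| TArrow : ty -> ty -> ty
| TInter : ty -> ty -> ty
| TRecEmpty : ty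
| TRecField : label -> ty -> ty
| TRecPlus : ty -> ty -> ty.

(** wf_ty s : s in T ;  rtype r : r in T_R *)
Inductive wf_ty : ty -> Prop :=
| wf_atom : forall a, wf_ty (TAtom a)
| wf_omega : wf_ty TOmega
| wf_arrow : forall s t, wf_ty s -> wf_ty t -> wf_ty (TArrow s t)
| wf_inter : forall s t, wf_ty s -> wf_ty t -> wf_ty (TInter s t)
| wf_rtype : forall r, rtype r -> wf_ty r
with rtype : ty -> Prop :=
| rt_empty : rtype TRecEmpty
| rt_field : forall l s, wf_ty s -> rtype (TRecField l s)
| rt_plus : forall r1 r2, rtype r1 -> rtype r2 -> rtype (TRecPlus r1 r2)
| rt_inter : forall r1 r2, rtype r1 -> rtype r2 -> rtype (TInter r1 r2).

(** labels of a record type (only meaningful on record types) *)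
Fixpoint ty_lbl (r : ty) : list label :=
  match r with
  | TRecEmpty => []
  | TRecField l _ => [l]
  | TInter r1 r2 => ty_lbl r1 ++ ty_lbl r2
  | TRecPlus r1 r2 => ty_lbl r1 ++ ty_lbl r2
  | _ => []
  end.

(** * Subtyping: least preorder on T with the listed rules.
    "rho = rho'" is rendered as the two inequalities. *)
Inductive sub : ty -> ty -> Prop :=
| sub_refl : forall s, wf_ty s -> sub s s
| sub_trans : forall s t u, sub s t -> sub t u -> sub s u
| sub_omega : forall s, wf_ty s -> sub s TOmega
| sub_omega_arrow : sub TOmega (TArrow TOmega TOmega)
| sub_inter_l : forall s t, wf_ty s -> wf_ty t -> sub (TInter s t) s
| sub_inter_r : forall s t, wf_ty s -> wf_ty t -> sub (TInter s t) t
| sub_inter_glb : forall s t1 t2, sub s t1 -> sub s t2 -> sub s (TInter t1 t2)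
| sub_arrow_inter : forall s t1 t2, wf_ty s -> wf_ty t1 -> wf_ty t2 ->
    sub (TInter (TArrow s t1) (TArrow s t2)) (TArrow s (TInter t1 t2))
| sub_arrow : forall s1 s2 t1 t2, sub s2 s1 -> sub t1 t2 ->
    sub (TArrow s1 t1) (TArrow s2 t2)
| sub_field_empty : forall l s, wf_ty s -> sub (TRecField l s) TRecEmpty
| sub_field_inter : forall l s t, wf_ty s -> wf_ty t ->
    sub (TInter (TRecField l s) (TRecField l t)) (TRecField l (TInter s t))
| sub_field : forall l s t, sub s t -> sub (TRecField l s) (TRecField l t)
| sub_plus_empty_r1 : forall r, rtype r -> sub (TRecPlus r TRecEmpty) r
| sub_plus_empty_r2 : forall r, rtype r -> sub r (TRecPlus r TRecEmpty)
| sub_plus_empty_l1 : forall r, rtype r -> sub (TRecPlus TRecEmpty r) r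
| sub_plus_empty_l2 : forall r, rtype r -> sub r (TRecPlus TRecEmpty r)
| sub_plus_assoc1 : forall r1 r2 r3, rtype r1 -> rtype r2 -> rtype r3 ->
    sub (TRecPlus (TRecPlus r1 r2) r3) (TRecPlus r1 (TRecPlus r2 r3))
| sub_plus_assoc2 : forall r1 r2 r3, rtype r1 -> rtype r2 -> rtype r3 ->
    sub (TRecPlus r1 (TRecPlus r2 r3)) (TRecPlus (TRecPlus r1 r2) r3)
| sub_plus_inter1 : forall r1 r2 r3, rtype r1 -> rtype r2 -> rtype r3 ->
    sub (TRecPlus (TInter r1 r2) r3) (TInter (TRecPlus r1 r3) (TRecPlus r2 r3))
| sub_plus_inter2 : forall r1 r2 r3, rtype r1 -> rtype r2 -> rtype r3 ->
    sub (TInter (TRecPlus r1 r3) (TRecPlus r2 r3)) (TRecPlus (TInter r1 r2) r3)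
| sub_plus_same1 : forall l s t r, wf_ty s -> wf_ty t -> rtype r ->
    sub (TRecPlus (TRecField l s) (TInter (TRecField l t) r)) (TInter (TRecField l t) r)
| sub_plus_same2 : forall l s t r, wf_ty s -> wf_ty t -> rtype r ->
    sub (TInter (TRecField l t) r) (TRecPlus (TRecField l s) (TInter (TRecField l t) r))
| sub_plus_diff1 : forall l l' s t r, l <> l' -> wf_ty s -> wf_ty t -> rtype r ->
    sub (TRecPlus (TRecField l s) (TInter (TRecField l' t) r))
        (TInter (TRecField l' t) (TRecPlus (TRecField l s) r))
| sub_plus_diff2 : forall l l' s t r, l <> l' -> wf_ty s -> wf_ty t -> rtype r ->
    sub (TInter (TRecField l' t) (TRecPlus (TRecField l s) r))
        (TRecPlus (TRecField l s) (TInter (TRecField l' t) r))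
| sub_plus_mono_l : forall r1 r2 r, rtype r1 -> rtype r2 -> rtype r ->
    sub r1 r2 -> sub (TRecPlus r1 r) (TRecPlus r2 r)
(* r1 = r2 => r + r1 = r + r2 (the symmetric instance gives the other direction) *)
| sub_plus_cong_r : forall r r1 r2, rtype r -> rtype r1 -> rtype r2 ->
    sub r1 r2 -> sub r2 r1 -> sub (TRecPlus r r1) (TRecPlus r r2).

(** * Bases: entry i gives the (optional) type of de Bruijn variable i *)
Definition basis := list (option ty).

Definition basis_wf (G : basis) : Prop :=
  forall x s, nth_error G x = Some (Some s) -> wf_ty s.

Inductive typing : basis -> term -> ty -> Prop :=
| ty_var : forall G x s, nth_error G x = Some (Some s) -> typing G (Var x) s
| ty_lam : forall G M s t, wf_ty s -> typing (Some s :: G) M t ->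
    typing G (Lam M) (TArrow s t)
| ty_app : forall G M N s t, typing G M (TArrow s t) -> typing G N s ->
    typing G (App M N) t
| ty_inter : forall G M s t, typing G M s -> typing G M t -> typing G M (TInter s t)
| ty_omega : forall G M, typing G M TOmega
| ty_sub : forall G M s t, typing G M s -> sub s t -> typing G M t
| ty_rec_empty : forall G fs, typing G (Rec fs) TRecEmpty
| ty_rec_field : forall G fs l Mk s, In (l, Mk) fs -> typing G Mk s ->
    typing G (Rec fs) (TRecField l s)
| ty_sel : forall G M l s, typing G M (TRecField l s) -> typing G (Sel M l) s
| ty_merge : forall G M fs r1 r2, rtype r1 -> rtype r2 ->
    typing G M r1 -> typing G (Rec fs) r2 ->
    (forall l, In l (rec_lbl fs) <-> In l (ty_lbl r2)) ->
    typing G (Merge M fs) (TRecPlus r1 r2).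

(* Main.v *)
Require Import Defs.
From Stdlib Require Import List Arith Bool Lia.
Import ListNotations.


Fixpoint lookup {A} (k : label) (L : list (label*A)) : option A :=
  match L with [] => None | (k',x)::L' => if Nat.eqb k k' then Some x else lookup k L' end.

Lemma lookup_In {A} k (L: list (label*A)) x : lookup k L = Some x -> In (k,x) L.
Proof.
  induction L as [|[k' y] L IH]; simpl; [discriminate|].
  destruct (Nat.eqb_spec k k'); [intros H; inversion H; subst; left; auto | right; auto].
Qed.

Lemma In_lookup {A} k (L : list (label*A)) x : NoDup (map fst L) -> In (k,x) L -> lookup k L = Some x.
Proof.
  induction L as [|[k' y] L IH]; simpl; intros Hnd Hin; [contradiction|].
  inversion Hnd; subst. destruct Hin as [Heq|Hin].
  - inversion Heq; subst. rewrite Nat.eqb_refl; auto.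
  - destruct (Nat.eqb_spec k k').
    + subst. exfalso. apply H1. apply in_map_iff. exists (k', x); auto.
    + auto.
Qed.

Lemma exb_iff k l : existsb (Nat.eqb k) l = true <-> In k l.
Proof.
  rewrite existsb_exists. split.
  - intros [x [H1 H2]]. apply Nat.eqb_eq in H2. subst; auto.
  - intros H; exists k; split; auto; apply Nat.eqb_refl.
Qed.

Definition ovr {A} (L1 L2 : list (label*A)) :=
  filter (fun p => negb (existsb (Nat.eqb (fst p)) (map fst L2))) L1 ++ L2.

Lemma in_ovr {A} (L1 L2 : list (label*A)) k x :
  In (k,x) (ovr L1 L2) <-> (In (k,x) L1 /\ ~ In k (map fst L2)) \/ In (k,x) L2.
Proof.
  unfold ovr. rewrite in_app_iff, filter_In. simpl. rewrite <- exb_iff.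
  destruct (existsb (Nat.eqb k) (map fst L2)); simpl; intuition auto; discriminate.
Qed.

Lemma in_fst {A} k (L : list (label*A)) : In k (map fst L) <-> exists x, In (k,x) L.
Proof.
  rewrite in_map_iff. split.
  - intros [[a b] [H1 H2]]. simpl in H1. subst. eauto.
  - intros [x H]. exists (k,x). auto.
Qed.

Lemma lbl_ovr {A} (L1 L2 : list (label*A)) k :
  In k (map fst (ovr L1 L2)) <-> In k (map fst L1) \/ In k (map fst L2).
Proof.
  rewrite !in_fst. split.
  - intros [x H]. apply in_ovr in H. destruct H as [[H _]|H]; eauto.
  - intros [[x H]|[x H]].
    + destruct (in_dec Nat.eq_dec k (map fst L2)) as [Hi|Hi].
      * apply in_fst in Hi. destruct Hi as [y Hy]. exists y. apply in_ovr. auto.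
      * exists x. apply in_ovr. auto.
    + exists x. apply in_ovr. auto.
Qed.

Lemma in_single {A} (k : label) (x : A) (l : label) (y : A) : In (k,x) [(l,y)] <-> k = l /\ x = y.
Proof. simpl. split; [intros [H|[]]; inversion H; auto | intros [-> ->]; auto]. Qed.

Fixpoint NF (r: ty) : list (label*ty) :=
  match r with
  | TRecEmpty => []
  | TRecField l s => [(l,s)]
  | TInter a b => NF a ++ NF b
  | TRecPlus a b => ovr (NF a) (NF b)
  | _ => []
  end.

Lemma NF_lbl r k : In k (map fst (NF r)) <-> In k (ty_lbl r).
Proof.
  induction r; simpl; try tauto.
  - rewrite map_app, !in_app_iff. tauto.
  - rewrite lbl_ovr, in_app_iff. tauto.
Qed.

Fixpoint T (L : list (label*ty)) : ty :=
  match L with [] => TRecEmpty | (k,t)::L' => TInter (TRecField k t) (T L') end.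

Definition WFL (L : list (label*ty)) := forall k t, In (k,t) L -> wf_ty t.

Lemma WFL_app L1 L2 : WFL L1 -> WFL L2 -> WFL (L1 ++ L2).
Proof. intros H1 H2 k t H. apply in_app_iff in H. destruct H; eauto. Qed.
Lemma WFL_ovr L1 L2 : WFL L1 -> WFL L2 -> WFL (ovr L1 L2).
Proof. intros H1 H2 k t H. apply in_ovr in H. destruct H as [[H _]|H]; eauto. Qed.
Lemma WFL_cons k t L : wf_ty t -> WFL L -> WFL ((k,t)::L).
Proof. intros H1 H2 k' t' [H|H]; [inversion H; subst; auto| eauto]. Qed.
Lemma WFL_cons_inv k t L : WFL ((k,t)::L) -> wf_ty t /\ WFL L.
Proof. intros H. split. eapply H; left; eauto. intros k' t' H'. eapply H; right; eauto. Qed.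

Lemma rtype_T L : WFL L -> rtype (T L).
Proof.
  induction L as [|[k t] L IH]; simpl; intros H; [constructor|].
  apply WFL_cons_inv in H. destruct H. constructor; [constructor; auto| auto].
Qed.

Lemma wf_field_inv l s : wf_ty (TRecField l s) -> wf_ty s.
Proof. intros H. inversion H; subst. inversion H0; auto. Qed.

Lemma rtype_wf r : rtype r -> wf_ty r.
Proof. apply wf_rtype. Qed.

Lemma NF_wf r : rtype r -> WFL (NF r).
Proof.
  induction 1; simpl.
  - intros k t [].
  - intros k t [H'|[]]. inversion H'; subst; auto.
  - apply WFL_ovr; auto.
  - apply WFL_app; auto.
Qed.

Lemma sub_wf s t : sub s t -> wf_ty s /\ wf_ty t.
Proof.
  induction 1; repeat match goal with H : _ /\ _ |- _ => destruct H end;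
  try (match goal with H : wf_ty (TRecField _ _) |- _ => apply wf_field_inv in H end);
  split; eauto 7 using wf_inter, wf_arrow, wf_omega, wf_rtype, rt_empty, rt_field, rt_plus, rt_inter.
Qed.

Definition eqv a b := sub a b /\ sub b a.

Lemma eqv_trans a b c : eqv a b -> eqv b c -> eqv a c.
Proof. intros [] []; split; eapply sub_trans; eauto. Qed.
Lemma eqv_sym a b : eqv a b -> eqv b a.
Proof. intros []; split; auto. Qed.
Lemma eqv_refl a : wf_ty a -> eqv a a.
Proof. intros; split; apply sub_refl; auto. Qed.

Lemma wf_T L : WFL L -> wf_ty (T L).
Proof. intros; apply wf_rtype, rtype_T; auto. Qed.

Lemma T_le_field L k t : WFL L -> In (k,t) L -> sub (T L) (TRecField k t).
Proof.
  induction L as [|[k' t'] L IH]; simpl; intros H Hin; [contradiction|].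
  apply WFL_cons_inv in H as [H1 H2].
  destruct Hin as [He|Hin].
  - inversion He; subst. apply sub_inter_l; [apply wf_rtype; constructor; auto| apply wf_T; auto].
  - eapply sub_trans; [apply sub_inter_r|apply IH; auto]; [apply wf_rtype; constructor; auto| apply wf_T; auto].
Qed.

Lemma T_le_empty L : WFL L -> sub (T L) TRecEmpty.
Proof.
  induction L as [|[k' t'] L IH]; simpl; intros H.
  - apply sub_refl, wf_rtype; constructor.
  - apply WFL_cons_inv in H as [H1 H2].
    eapply sub_trans; [apply sub_inter_l|apply sub_field_empty; auto]; [apply wf_rtype; constructor; auto| apply wf_T; auto].
Qed.

Lemma le_T X L : sub X TRecEmpty -> (forall k t, In (k,t) L -> sub X (TRecField k t)) -> sub X (T L).
Proof.
  induction L as [|[k' t'] L IH]; simpl; intros H1 H2; auto.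
  apply sub_inter_glb; auto.
Qed.

Lemma T_incl L1 L2 : WFL L1 -> (forall k t, In (k,t) L2 -> In (k,t) L1) -> sub (T L1) (T L2).
Proof. intros; apply le_T; [apply T_le_empty|intros; apply T_le_field]; auto. Qed.

Lemma T_same L1 L2 : WFL L1 -> WFL L2 -> (forall k t, In (k,t) L1 <-> In (k,t) L2) -> eqv (T L1) (T L2).
Proof. intros H1 H2 H; split; apply T_incl; auto; intros; apply H; auto. Qed.

Lemma T_app L1 L2 : WFL L1 -> WFL L2 -> eqv (T (L1 ++ L2)) (TInter (T L1) (T L2)).
Proof.
  intros H1 H2. split.
  - apply sub_inter_glb; apply T_incl; auto using WFL_app; intros; apply in_app_iff; auto.
  - apply le_T.
    + eapply sub_trans; [apply sub_inter_l|apply T_le_empty]; auto using wf_T.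
    + intros k t Hin. apply in_app_iff in Hin as [Hin|Hin].
      * eapply sub_trans; [apply sub_inter_l|apply T_le_field; eauto]; auto using wf_T.
      * eapply sub_trans; [apply sub_inter_r|apply T_le_field; eauto]; auto using wf_T.
Qed.

Lemma inter_cong a a' b b' : sub a a' -> sub b b' -> sub (TInter a b) (TInter a' b').
Proof.
  intros H1 H2. destruct (sub_wf _ _ H1), (sub_wf _ _ H2).
  apply sub_inter_glb; eapply sub_trans; [apply sub_inter_l| |apply sub_inter_r|]; eauto.
Qed.

Lemma inter_eqv a a' b b' : eqv a a' -> eqv b b' -> eqv (TInter a b) (TInter a' b').
Proof. intros [] []; split; apply inter_cong; auto. Qed.

Lemma plus_cong a a' b b' : rtype a -> rtype a' -> rtype b -> rtype b' ->
  eqv a a' -> eqv b b' -> sub (TRecPlus a b) (TRecPlus a' b').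
Proof.
  intros ? ? ? ? [] []. apply sub_trans with (TRecPlus a' b).
  - apply sub_plus_mono_l; auto.
  - apply sub_plus_cong_r; auto.
Qed.

Lemma plus_eqv a a' b b' : rtype a -> rtype a' -> rtype b -> rtype b' ->
  eqv a a' -> eqv b b' -> eqv (TRecPlus a b) (TRecPlus a' b').
Proof. intros; split; apply plus_cong; auto using eqv_sym. Qed.

Ltac st := simpl in *; split; intros; repeat match goal with
 | H: _ /\ _ |- _ => destruct H
 | H: _ \/ _ |- _ => destruct H
 | H: (_,_) = (_,_) |- _ => inversion H; clear H; subst
 | H: False |- _ => contradiction
 end; firstorder (subst; try congruence).

Lemma plus_field L k t : WFL L -> wf_ty t ->
  eqv (TRecPlus (TRecField k t) (T L)) (T (ovr [(k,t)] L)).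
Proof.
  intros HL Ht. induction L as [|[k2 t2] L IH].
  - simpl. eapply eqv_trans; [split; [apply sub_plus_empty_r1|apply sub_plus_empty_r2]; constructor; auto|].
    split.
    * apply sub_inter_glb; [apply sub_refl|apply sub_field_empty]; auto. apply wf_rtype; constructor; auto.
    * apply sub_inter_l. apply wf_rtype; constructor; auto. apply wf_rtype; constructor.
  - cbn [T]. apply WFL_cons_inv in HL as [H1 H2].
    destruct (Nat.eq_dec k k2) as [->|Hne].
    + eapply eqv_trans; [split; [apply sub_plus_same1|apply sub_plus_same2]; auto using rtype_T|].
      change (TInter (TRecField k2 t2) (T L)) with (T ((k2,t2)::L)).
      assert (WFL [(k2,t)]) by (apply WFL_cons; auto; intros ? ? []).
      apply T_same; auto using WFL_cons, WFL_ovr.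
      intros k' t'. rewrite in_ovr. simpl. st.
    + eapply eqv_trans; [split; [apply sub_plus_diff1|apply sub_plus_diff2]; auto using rtype_T|].
      eapply eqv_trans; [apply inter_eqv; [apply eqv_refl; apply wf_rtype; constructor; auto|apply IH; auto]|].
      change (TInter (TRecField k2 t2) (T (ovr [(k,t)] L))) with (T ((k2,t2)::ovr [(k,t)] L)).
      assert (WFL [(k,t)]) by (apply WFL_cons; auto; intros ? ? []).
      apply T_same; auto using WFL_cons, WFL_ovr.
      intros k' t'. simpl. rewrite !in_ovr. simpl. st.
Qed.

Lemma plus_T L1 L2 : WFL L1 -> WFL L2 ->
  eqv (TRecPlus (T L1) (T L2)) (T (ovr L1 L2)).
Proof.
  intros H1 H2. induction L1 as [|[k t] L1 IH].
  - cbn [T]. eapply eqv_trans; [split; [apply sub_plus_empty_l1|apply sub_plus_empty_l2]; auto using rtype_T|].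
    apply T_same; auto using WFL_ovr.
    intros k' t'. rewrite in_ovr. simpl. st.
  - cbn [T]. apply WFL_cons_inv in H1 as [Ht HL].
    assert (WFL [(k,t)]) by (apply WFL_cons; auto; intros ? ? []).
    eapply eqv_trans; [split; [apply sub_plus_inter1|apply sub_plus_inter2]; try constructor; auto using rtype_T|].
    eapply eqv_trans; [apply inter_eqv; [apply plus_field|apply IH]; auto|].
    eapply eqv_trans; [apply eqv_sym, T_app; auto using WFL_ovr|].
    apply T_same; auto using WFL_ovr, WFL_app, WFL_cons.
    intros k' t'. rewrite in_app_iff, !in_ovr. simpl. st.
Qed.

Lemma NF_eqv r : rtype r -> eqv r (T (NF r)).
Proof.
  induction 1; simpl.
  - apply eqv_refl. apply wf_rtype; constructor.
  - split.
    * apply sub_inter_glb; [apply sub_refl|apply sub_field_empty]; auto. apply wf_rtype; constructor; auto.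
    * apply sub_inter_l. apply wf_rtype; constructor; auto. apply wf_rtype; constructor.
  - eapply eqv_trans; [apply plus_eqv with (a' := T (NF r1)) (b' := T (NF r2)); eauto using rtype_T, NF_wf|].
    apply plus_T; auto using NF_wf.
  - eapply eqv_trans; [apply inter_eqv; eauto|].
    apply eqv_sym, T_app; auto using NF_wf.
Qed.

Definition val := label -> option (ty -> Prop).
Definition satL (v: val) (L: list (label*ty)) :=
  forall k t, In (k,t) L -> exists P, v k = Some P /\ P t.
Fixpoint sat (v: val) (s: ty) : Prop :=
  match s with
  | TInter a b => sat v a /\ sat v b
  | TRecField l t => exists P, v l = Some P /\ P t
  | TRecPlus a b => satL v (ovr (NF a) (NF b))
  | _ => True
  end.
Definition good (v: val) := forall k P, v k = Some P ->
  (forall a b, P a -> sub a b -> P b) /\ (forall a b, P a -> P b -> P (TInter a b)).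

Lemma satL_app v L1 L2 : satL v (L1 ++ L2) <-> satL v L1 /\ satL v L2.
Proof.
  unfold satL. split.
  - intros H; split; intros; apply H; apply in_app_iff; auto.
  - intros [H1 H2] k t Hin. apply in_app_iff in Hin as [|]; auto.
Qed.

Lemma satA v r : rtype r -> (sat v r <-> satL v (NF r)).
Proof.
  induction 1; simpl.
  - split; auto. intros _ k t [].
  - split.
    + intros [P [H1 H2]] k t [He|[]]. inversion He; subst. eauto.
    + intros H1. apply H1. left; auto.
  - tauto.
  - rewrite satL_app. tauto.
Qed.

Lemma satL_incl v L1 L2 : (forall k t, In (k,t) L2 -> In (k,t) L1) -> satL v L1 -> satL v L2.
Proof. unfold satL; eauto. Qed.

Inductive gen (S : ty -> Prop) : ty -> Prop :=
| g_in : forall t, S t -> gen S t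
| g_sub : forall a b, gen S a -> sub a b -> gen S b
| g_int : forall a b, gen S a -> gen S b -> gen S (TInter a b).

Definition cv (L : list (label*ty)) : val := fun k =>
  if existsb (Nat.eqb k) (map fst L) then Some (gen (fun t => In (k,t) L)) else None.

Lemma cv_good L : good (cv L).
Proof.
  unfold cv; intros k P. destruct existsb; intros H; inversion H; subst.
  split; intros; eauto using g_sub, g_int.
Qed.

Lemma cv_sat L : satL (cv L) L.
Proof.
  intros k t H. unfold cv. assert (existsb (Nat.eqb k) (map fst L) = true).
  { apply exb_iff. apply in_fst. eauto. }
  rewrite H0. eexists; split; eauto using g_in.
Qed.

Lemma cv_some L k P : cv L k = Some P -> In k (map fst L).
Proof. unfold cv. destruct existsb eqn:E; intros H; inversion H. apply exb_iff; auto. Qed.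

Lemma cv_transfer L v k t : good v -> (exists P, cv L k = Some P /\ P t) ->
  (forall t', In (k,t') L -> exists P, v k = Some P /\ P t') ->
  exists P, v k = Some P /\ P t.
Proof.
  intros Hg [P [H1 H2]] Hall.
  pose proof (cv_some _ _ _ H1) as Hk. apply in_fst in Hk as [t0 Ht0].
  destruct (Hall t0 Ht0) as [Q [HQ _]]. exists Q. split; auto.
  unfold cv in H1. destruct existsb; inversion H1; subst.
  destruct (Hg _ _ HQ) as [Hup Hint].
  induction H2.
  - destruct (Hall _ H) as [Q' [HQ' HQ't]]. rewrite HQ in HQ'. inversion HQ'; subst; auto.
  - eauto.
  - eauto.
Qed.

Lemma sat_rt v a b : rtype a -> rtype b ->
  (forall k t, In (k,t) (NF b) -> In (k,t) (NF a)) -> sat v a -> sat v b.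
Proof.
  intros Ha Hb H Hs. apply satA; auto. apply satA in Hs; auto. eapply satL_incl; eauto.
Qed.

Ltac st2 := simpl in *; intros; repeat match goal with
 | H: _ /\ _ |- _ => destruct H
 | H: _ \/ _ |- _ => destruct H
 | H: (_,_) = (_,_) |- _ => inversion H; clear H; subst
 | H: False |- _ => contradiction
 end; firstorder (subst; try congruence).

Ltac setsolve := let k0 := fresh "k" in let t0 := fresh "t" in intros k0 t0;
  simpl NF; repeat progress (simpl; rewrite ?in_app_iff, ?in_ovr, ?lbl_ovr, ?map_app, ?in_app_iff); st2.

Lemma sound s t : sub s t -> forall v, good v -> sat v s -> sat v t.
Proof.
  induction 1; intros v Hg Hs;
  try (match type of Hs with sat _ ?A => apply (sat_rt v A); [eauto using rt_empty, rt_field, rt_plus, rt_inter ..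
                      | setsolve | exact Hs] end; fail).
  all: try (simpl in *; tauto).
  - eauto.
  - simpl in *; split; eauto.
  - simpl in *. destruct Hs as [[P [H1 H2]] [P' [H1' H2']]]. rewrite H1 in H1'. inversion H1'; subst.
    exists P'; split; auto. eapply (Hg _ _ H1); eauto.
  - simpl in *. destruct Hs as [P [H1 H2]]. exists P; split; auto. eapply (Hg _ _ H1); eauto.
  - simpl in Hs |- *.
    assert (Hc: satL (cv (NF r1)) (NF r2)) by
      (apply satA; auto; apply IHsub; [apply cv_good| apply satA; auto; apply cv_sat]).
    intros k t Hin. apply in_ovr in Hin as [[Hin Hn]|Hin].
    + apply cv_transfer with (NF r1); auto. intros t' Ht'. apply Hs. apply in_ovr; left; auto.
    + apply Hs; apply in_ovr; auto.
  - simpl in Hs |- *.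
    assert (Hc: satL (cv (NF r1)) (NF r2)) by
      (apply satA; auto; apply IHsub1; [apply cv_good| apply satA; auto; apply cv_sat]).
    assert (Hc': satL (cv (NF r2)) (NF r1)) by
      (apply satA; auto; apply IHsub2; [apply cv_good| apply satA; auto; apply cv_sat]).
    intros k t Hin. apply in_ovr in Hin as [[Hin Hn]|Hin].
    + apply Hs. apply in_ovr. left. split; auto.
      intro Hk; apply in_fst in Hk as [t1 Ht1]; destruct (Hc' _ _ Ht1) as [P [HP _]].
      apply cv_some in HP; contradiction.
    + apply cv_transfer with (NF r1); auto. intros t' Ht'. apply Hs. apply in_ovr; right; auto.
Qed.

Definition vfs (G : basis) (fs : list (label*term)) : val := fun k =>
  match lookup k fs with Some M => Some (typing G M) | None => None end.

Lemma vfs_good G fs : good (vfs G fs).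
Proof.
  unfold vfs; intros k P. destruct lookup; intros H; inversion H; subst.
  split; intros; [eapply ty_sub|apply ty_inter]; eauto.
Qed.

Lemma rec_sat G fs : NoDup (rec_lbl fs) -> forall M s, typing G M s -> M = Rec fs -> sat (vfs G fs) s.
Proof.
  intros Hnd M s H. induction H; intros E; try discriminate; simpl; auto.
  - eapply sound; eauto using vfs_good.
  - inversion E; subst. exists (typing G Mk). split; auto.
    unfold vfs. rewrite (In_lookup _ _ _ Hnd H). auto.
Qed.

Lemma rec_T G hs L : (forall k t, In (k,t) L -> exists M, In (k,M) hs /\ typing G M t) ->
  typing G (Rec hs) (T L).
Proof.
  induction L as [|[k t] L IH]; simpl; intros H.
  - constructor.
  - apply ty_inter.
    + destruct (H k t) as [M [H1 H2]]; auto. eapply ty_rec_field; eauto.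
    + apply IH. intros; apply H; auto.
Qed.

Lemma vfs_in G fs k t : (exists P, vfs G fs k = Some P /\ P t) -> exists M, lookup k fs = Some M /\ typing G M t.
Proof. unfold vfs. destruct lookup; intros [P [H1 H2]]; inversion H1; subst; eauto. Qed.

Lemma merge_typ G fs gs r1 r2 : rtype r1 -> rtype r2 -> NoDup (rec_lbl fs) -> NoDup (rec_lbl gs) ->
  typing G (Rec fs) r1 -> typing G (Rec gs) r2 ->
  (forall l, In l (rec_lbl gs) <-> In l (ty_lbl r2)) ->
  typing G (Rec (rec_merge fs gs)) (TRecPlus r1 r2).
Proof.
  intros Hr1 Hr2 Hn1 Hn2 H1 H2 Hl.
  assert (S1 : satL (vfs G fs) (NF r1)) by (apply satA; auto; eapply rec_sat; eauto).
  assert (S2 : satL (vfs G gs) (NF r2)) by (apply satA; auto; eapply rec_sat; eauto).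
  destruct (NF_eqv (TRecPlus r1 r2)) as [_ Hs]; [constructor; auto|].
  eapply ty_sub; [|exact Hs]. simpl NF. apply rec_T.
  assert (Hm : rec_merge fs gs = ovr fs gs) by reflexivity. rewrite Hm.
  intros k t Hin. apply in_ovr in Hin as [[Hin Hn]|Hin].
  - destruct (vfs_in G fs k t (S1 k t Hin)) as [M [HM HT]].
    exists M; split; auto. apply in_ovr. left. split; [apply lookup_In; auto|].
    intro Hk. apply Hn. apply NF_lbl. apply Hl. exact Hk.
  - destruct (vfs_in G gs k t (S2 k t Hin)) as [M [HM HT]].
    exists M; split; auto. apply in_ovr. right. apply lookup_In; auto.
Qed.

Fixpoint lsat G M s : Prop :=
  match s with
  | TArrow a b => typing (Some a :: G) M b
  | TInter a b => lsat G M a /\ lsat G M b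
  | _ => True
  end.

Definition ctx_le (G' G : basis) := forall x s, nth_error G x = Some (Some s) ->
  exists s', nth_error G' x = Some (Some s') /\ (s' = s \/ sub s' s).

Lemma narrow G M t : typing G M t -> forall G', ctx_le G' G -> typing G' M t.
Proof.
  induction 1; intros G' Hc; eauto using typing.
  - destruct (Hc _ _ H) as [s' [H1 [->|H2]]]; eauto using typing.
  - apply ty_lam; auto. apply IHtyping.
    intros [|x] s0; simpl; intros E.
    + inversion E; subst. eauto.
    + apply Hc; auto.
Qed.

Lemma rtype_lsat G M r : rtype r -> lsat G M r.
Proof. induction 1; simpl; auto. Qed.

Lemma lsound s t : sub s t -> forall G M, lsat G M s -> lsat G M t.
Proof.
  induction 1; intros G M Hs; simpl in *; try tauto; eauto using rtype_lsat.
  - apply ty_omega.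
  - destruct Hs; apply ty_inter; auto.
  - eapply ty_sub; [|eauto]. eapply narrow; eauto.
    intros [|x] s0; simpl; intros E.
    + inversion E; subst. eauto.
    + eauto.
Qed.

Lemma lam_gen G N s : typing G N s -> forall M, N = Lam M -> lsat G M s.
Proof.
  induction 1; intros M0 E; try discriminate; simpl; auto.
  - inversion E; subst; auto.
  - eapply lsound; eauto.
Qed.

Lemma rec_lbl_map (f : label * term -> term) fs : rec_lbl (map (fun p => (fst p, f p)) fs) = rec_lbl fs.
Proof. unfold rec_lbl; rewrite map_map; reflexivity. Qed.

Lemma weaken G M t : typing G M t -> forall G1 G2 G3, G = G1 ++ G2 ->
  typing (G1 ++ G3 ++ G2) (lift_by (length G3) (length G1) M) t.
Proof.
  induction 1; intros G1 G2 G3 E; subst; simpl; eauto using typing.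
  - destruct (Nat.leb_spec (length G1) x).
    + apply ty_var. rewrite nth_error_app2 by lia. rewrite nth_error_app2 by lia.
      rewrite nth_error_app2 in H by lia.
      replace (x + length G3 - length G1 - length G3) with (x - length G1) by lia. auto.
    + apply ty_var. rewrite nth_error_app1 by lia. rewrite nth_error_app1 in H by lia; auto.
  - apply ty_lam; auto. apply (IHtyping (Some s :: G1) G2 G3); reflexivity.
  - eapply ty_rec_field; [|eauto]. apply in_map_iff. exists (l, Mk); auto.
  - specialize (IHtyping2 G1 G2 G3 eq_refl). simpl in IHtyping2.
    eapply ty_merge; eauto. intros l. rewrite rec_lbl_map. auto.
Qed.

Lemma subst_lem G M t : typing G M t -> forall G1 G2 s N, G = G1 ++ Some s :: G2 -> typing G2 N s ->
  typing (G1 ++ G2) (subst M (length G1) N) t.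
Proof.
  induction 1; intros G1 G2 s0 N0 E HN; subst; simpl; eauto using typing.
  - destruct (Nat.ltb_spec x (length G1)).
    + apply ty_var. rewrite nth_error_app1 by lia. rewrite nth_error_app1 in H by lia; auto.
    + destruct (Nat.eqb_spec x (length G1)).
      * subst. rewrite nth_error_app2 in H by lia. rewrite Nat.sub_diag in H. simpl in H.
        inversion H; subst.
        pose proof (weaken _ _ _ HN [] G2 G1 eq_refl) as W. simpl in W. exact W.
      * apply ty_var. rewrite nth_error_app2 in H by lia. rewrite nth_error_app2 by lia.
        destruct (x - length G1) as [|m] eqn:Ex; [lia|]. simpl in H.
        replace (Nat.pred x - length G1) with m by lia. auto.
  - apply ty_lam; auto. apply (IHtyping (Some s :: G1) G2 s0 N0); auto.
  - eapply ty_rec_field; [|eauto]. apply in_map_iff. exists (l, Mk); auto.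
  - specialize (IHtyping2 G1 G2 s0 N0 eq_refl HN). simpl in IHtyping2.
    eapply ty_merge; eauto. intros l. rewrite rec_lbl_map. auto.
Qed.

Lemma SR G M s : typing G M s -> forall N, wf_term M -> step M N -> typing G N s.
Proof.
  induction 1; intros N0 Hwf Hst.
  - inversion Hst.
  - inversion Hst; subst. inversion Hwf; subst. apply ty_lam; auto.
  - inversion Hwf; subst. inversion Hst; subst.
    + pose proof (lam_gen _ _ _ H _ eq_refl) as HL. simpl in HL.
      exact (subst_lem _ _ _ HL [] G s N eq_refl H0).
    + eapply ty_app; eauto.
    + eapply ty_app; eauto.
  - apply ty_inter; auto.
  - apply ty_omega.
  - eapply ty_sub; eauto.
  - inversion Hst; subst. constructor.
  - inversion Hwf; subst. inversion Hst; subst.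
    apply in_app_iff in H as [Hin|[He|Hin]].
    + eapply ty_rec_field; [|eauto]. apply in_app_iff; auto.
    + inversion He; subst. eapply ty_rec_field; [apply in_app_iff; right; left; reflexivity|].
      apply IHtyping; auto.
      rewrite Forall_forall in H3. apply (H3 (l, Mk)). apply in_app_iff; right; left; auto.
    + eapply ty_rec_field; [|eauto]. apply in_app_iff; right; right; auto.
  - inversion Hwf; subst. inversion Hst; subst.
    + inversion H1; subst.
      pose proof (rec_sat G fs H2 _ _ H eq_refl) as HS. simpl in HS.
      destruct (vfs_in _ _ _ _ HS) as [M' [HM' HT]].
      rewrite (In_lookup _ _ _ H2 H4) in HM'. inversion HM'; subst. auto.
    + apply ty_sel; auto.
  - inversion Hwf; subst. inversion Hst; subst.
    + inversion H6; subst. apply merge_typ; auto.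
    + apply ty_merge; auto.
    + apply ty_merge; auto.
      * apply IHtyping2; [constructor; auto|]. apply st_rec; auto.
      * intros l0. rewrite <- H3. unfold rec_lbl. rewrite !map_app. simpl. tauto.
Qed.

Theorem theorem3p16 :
  forall (G : basis) (M N : term) (s : ty),
    basis_wf G -> wf_term M -> wf_ty s ->
    typing G M s -> step M N -> typing G N s.
Proof.
  intros G M N s _ Hwf _ Ht Hst. eapply SR; eauto.
Qed.
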